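(* Let $q$ be a prime power, let $\ell \geq 1$ and $n \geq 2\ell+1$ be integers, and put $k = n - \ell$. Let $f$ be a monic irreducible polynomial of degree $\ell$ over $\mathbb{F}_q$ with $\ell \times \ell$ companion matrix $M$, and let $\mathcal{C} = \mathrm{span}_{\mathbb{F}_q}(I, M, M^2, \ldots, M^{\ell-1}) \subseteq \mathbb{F}_q^{\ell \times \ell}$ (the matrix representation of $\mathbb{F}_{q^\ell}$ over $\mathbb{F}_q$), where $I$ is the $\ell \times \ell$ identity matrix. For a matrix $A$ write $[A]_1$ for its first column, and let $\mathbf{0}$ denote the $\ell \times (n-2\ell-1)$ zero matrix (empty if $n = 2\ell+1$). Define \[ \mathcal{G} = \bigl\{ \mathrm{rowspace}\,[\, I \mid A \mid [A^2]_1 \mid \mathbf{0}\,] : A \in \mathcal{C} \bigr\}, \] a family of subspaces of $\mathbb{F}_q^n$, and let $\mathcal{F} = \{ U^\perp : U \in \mathcal{G}\}$, where $U^\perp$ is the orthogonal complement of $U$ with respect to the standard bilinear form on $\mathbb{F}_q^n$. Then $\mathcal{F}$ is a family of $k$-dimensional subspaces of $\mathbb{F}_q^n$ of size $q^\ell = q^{n-k}$, and for every $s \geq 3$, $\mathcal{F}$ is set-like $s$-sunflower-free.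
   Context: A $k$-space means a $k$-dimensional subspace of $\mathbb{F}_q^n$. A family (a set, not a multiset) of $s$ distinct $k$-spaces $S_1, \ldots, S_s$ of $\mathbb{F}_q^n$ is a set-like $s$-sunflower with kernel $K$ if $K = S_i \cap S_j$ for all distinct $i, j$. A family of $k$-spaces is set-like $s$-sunflower-free if no $s$ of its members form a set-like $s$-sunflower. *)

(* Defs.v *)
From HB Require Import structures.
From mathcomp Require Import all_boot all_order all_algebra all_field.
Set Implicit Arguments. Unset Strict Implicit. Unset Printing Implicit Defensive.
Import GRing.Theory.
Local Open Scope ring_scope.

Section Defs.
Variable F : finFieldType.

(* The l x l companion matrix of f (MathComp's [companionmx], viewed at
   dimension l; exact when size f = l.+1, i.e. deg f = l). *)
Definition companion (l : nat) (f : {poly F}) : 'M[F]_l :=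
  conform_mx (0 : 'M[F]_l) (companionmx f).

Definition mat_span_powers (l : nat) (M : 'M[F]_l) : {set 'M[F]_l} :=
  [set \sum_(i < l) c i *: M ^+ i | c : {ffun 'I_l -> F}].

Definition first_col (l : nat) (A : 'M[F]_l) : 'M[F]_(l, 1) :=
  A *m \col_(j < l) ((j : nat) == 0%N)%:R.

(* The l x n matrix [ I | A | [A^2]_1 | 0 ]  (0 is l x (n - 2l - 1));
   exact when n >= 2l+1. *)
Definition gen_mx (l n : nat) (A : 'M[F]_l) : 'M[F]_(l, n) :=
  conform_mx (0 : 'M[F]_(l, n))
    (row_mx (1%:M : 'M[F]_l)
       (row_mx A (row_mx (first_col (A ^+ 2))
                         (0 : 'M[F]_(l, n - (l + l).+1))))).

(* Orthogonal complement of the row space of U w.r.t. the standard bilinear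
   form v.w = v *m w^T on F^n: all v with v *m U^T = 0. *)
Definition perp_mx (m n : nat) (U : 'M[F]_(m, n)) : 'M[F]_n := kermx U^T.

Definition set_like_sunflower (n s : nat) (S : 'I_s -> 'M[F]_n) : Prop :=
  (forall i j, i != j -> ~~ (S i == S j)%MS) /\
  exists K : 'M[F]_n, forall i j, i != j -> (S i :&: S j == K)%MS.

(* A family (set of subspaces, each represented by a canonical matrix
   <<U>>) is set-like s-sunflower-free. *)
Definition sunflower_free (n s : nat) (Fam : {set 'M[F]_n}) : Prop :=
  forall S : 'I_s -> 'M[F]_n, (forall i, S i \in Fam) ->
    ~ set_like_sunflower S.

End Defs.

(* Main.v *)
Require Import Defs.
From HB Require Import structures.
From mathcomp Require Import all_boot all_order all_algebra all_field.
From mathcomp Require Import zify.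
Set Implicit Arguments. Unset Strict Implicit. Unset Printing Implicit Defensive.
Import GRing.Theory.
Local Open Scope ring_scope.

Lemma perp_sub (F : fieldType) m1 m2 n (X : 'M[F]_(m1,n)) (Y : 'M[F]_(m2,n)) :
  (kermx X^T <= kermx Y^T)%MS -> (Y <= X)%MS.
Proof.
move=> /submxP [D hD].
have XK : (X <= kermx (kermx X^T)^T)%MS.
  by apply/sub_kermxP; rewrite -[X in X *m _]trmxK -trmx_mul mulmx_ker trmx0.
have eqX : (X == kermx (kermx X^T)^T)%MS.
  rewrite -(mxrank_leqif_eq XK) mxrank_ker mxrank_tr mxrank_ker mxrank_tr.
  by rewrite subKn ?rank_leq_col.
have YK : (Y <= kermx (kermx X^T)^T)%MS.
  have YY : Y *m (kermx Y^T)^T = 0.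
    by rewrite -[Y in Y *m _]trmxK -trmx_mul mulmx_ker trmx0.
  by apply/sub_kermxP; rewrite hD trmx_mul mulmxA YY mul0mx.
by apply: submx_trans YK _; case/andP: eqX.
Qed.

Lemma perp_col (F : fieldType) m1 m2 n (X : 'M[F]_(m1,n)) (Y : 'M[F]_(m2,n)) :
  (kermx (col_mx X Y)^T <= kermx X^T :&: kermx Y^T)%MS.
Proof.
rewrite sub_capmx; apply/andP; split; apply/sub_kermxP;
  have := mulmx_ker (col_mx X Y)^T; rewrite tr_col_mx mul_mx_row;
  by move/eqP; rewrite row_mx_eq0 => /andP[/eqP ? /eqP ?].
Qed.

Lemma conform_eq (F : fieldType) l d (X : 'M[F]_d) (e : d = l) :
  char_poly (conform_mx (0 : 'M[F]_l) X) = char_poly X.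
Proof. by subst d; rewrite conform_mx_id. Qed.

Definition U (F : finFieldType) l m (A : 'M[F]_l) : 'M[F]_(l, l + (l + (1 + m))) :=
  row_mx 1%:M (row_mx A (row_mx (first_col (A ^+ 2)) 0)).

Lemma genE (F : finFieldType) l m (A : 'M[F]_l) :
  gen_mx (l + (l + (1 + m))) A = U m A.
Proof.
rewrite /gen_mx.
have -> : (l + (l + (1 + m)) - (l + l).+1 = m)%N by lia.
by rewrite conform_mx_id.
Qed.

Lemma U_P1 (F : finFieldType) l m (A : 'M[F]_l) :
  U m A *m col_mx 1%:M 0 = 1%:M.
Proof. by rewrite /U mul_row_col mul1mx mulmx0 addr0. Qed.

Lemma U_P2 (F : finFieldType) l m (A : 'M[F]_l) :
  U m A *m col_mx 0 (col_mx 1%:M 0) = A.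
Proof. by rewrite /U !mul_row_col !mulmx0 mulmx1 add0r addr0. Qed.

Lemma U_P3 (F : finFieldType) l m (A : 'M[F]_l) :
  U m A *m col_mx 0 (col_mx 0 (col_mx 1%:M 0)) = first_col (A ^+ 2).
Proof. by rewrite /U !mul_row_col !mulmx0 mulmx1 !add0r addr0. Qed.

Lemma rank_U (F : finFieldType) l m (A : 'M[F]_l) : \rank (U m A) = l.
Proof.
apply/eqP; rewrite eqn_leq rank_leq_row /=.
by rewrite -{1}(mxrank1 F l) -(U_P1 m A) mxrankM_maxl.
Qed.

Lemma U_inj (F : finFieldType) l m (A B : 'M[F]_l) :
  (U m A <= U m B)%MS -> A = B.
Proof.
case/submxP => D hD.
have D1 : D = 1%:M.
  by have := congr1 (mulmx^~ (col_mx 1%:M 0)) hD; rewrite /= -mulmxA !U_P1 mulmx1.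
have := congr1 (mulmx^~ (col_mx 0 (col_mx 1%:M 0))) hD.
by rewrite /= -mulmxA !U_P2 D1 mul1mx.
Qed.

Lemma U_span (F : finFieldType) l m (A B C : 'M[F]_l) :
  (U m C <= col_mx (U m A) (U m B))%MS ->
  exists D : 'M[F]_l, C - A = D *m (B - A) /\
     first_col (C ^+ 2) - first_col (A ^+ 2) =
     D *m (first_col (B ^+ 2) - first_col (A ^+ 2)).
Proof.
case/submxP => D hD.
rewrite -[D]hsubmxK mul_row_col in hD.
set D0 := lsubmx D in hD; set D1 := rsubmx D in hD.
have e1 := congr1 (mulmx^~ (col_mx 1%:M 0)) hD.
rewrite /= mulmxDl -!mulmxA !U_P1 !mulmx1 in e1.
have e2 := congr1 (mulmx^~ (col_mx 0 (col_mx 1%:M 0))) hD.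
rewrite /= mulmxDl -!mulmxA !U_P2 in e2.
have e3 : U m C *m col_mx 0 (col_mx 0 (col_mx 1%:M 0)) =
   (D0 *m U m A + D1 *m U m B) *m col_mx 0 (col_mx 0 (col_mx 1%:M 0)) by rewrite hD.
rewrite mulmxDl -!mulmxA !U_P3 in e3.
have E0 : D0 = 1%:M - D1 by rewrite e1 addrK.
exists D1; split.
  rewrite e2 E0 mulmxBl mul1mx mulmxBr.
  by rewrite [A - D1 *m A]addrC addrAC addrK addrC.
rewrite e3 E0 mulmxBl mul1mx mulmxBr.
set a := first_col (A ^+ 2).
by rewrite [a - D1 *m a]addrC addrAC addrK addrC.
Qed.

Definition Pc (F : finFieldType) l (c : {ffun 'I_l.+1 -> F}) : {poly F} :=
  \poly_(i < l.+1) c (inord i).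

Lemma hP (F : finFieldType) l (M : 'M[F]_l.+1) c :
  horner_mx M (Pc c) = \sum_(i < l.+1) c i *: M ^+ i.
Proof.
rewrite /Pc poly_def linear_sum; apply: eq_bigr => i _.
by rewrite linearZ /= rmorphXn /= horner_mx_X inord_val.
Qed.

Lemma C_poly (F : finFieldType) l (M : 'M[F]_l.+1) A :
  A \in mat_span_powers M -> exists p, A = horner_mx M p.
Proof. by case/imsetP => c _ ->; exists (Pc c); rewrite hP. Qed.

Lemma C_comm (F : finFieldType) l (M : 'M[F]_l.+1) A B :
  A \in mat_span_powers M -> B \in mat_span_powers M -> A *m B = B *m A.
Proof.
move=> /C_poly[p ->] /C_poly[r ->].
by rewrite mulmxE -!rmorphM /= mulrC.
Qed.

Lemma comp_char (F : finFieldType) l (f : {poly F}) :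
  f \is monic -> size f = l.+2 -> horner_mx (companion l.+1 f) f = 0.
Proof.
move=> fm fs.
have e : char_poly (companion l.+1 f) = f.
  by rewrite /companion conform_eq ?companionmxK // fs.
by have := Cayley_Hamilton (companion l.+1 f); rewrite e.
Qed.

Lemma C_unit (F : finFieldType) l (f : {poly F}) A B :
  f \is monic -> size f = l.+2 -> irreducible_poly f ->
  A \in mat_span_powers (companion l.+1 f) ->
  B \in mat_span_powers (companion l.+1 f) -> A != B ->
  (A - B) \in unitmx.
Proof.
move=> fm fs firr /C_poly[p ->] /C_poly[r ->] neq.
set M := companion l.+1 f in neq *.
rewrite -rmorphB /=; set t := p - r.
have hf : horner_mx M f = 0 by exact: comp_char.
have ndiv : ~~ (f %| t).
  apply/negP => /dvdpP[g gt]; move: neq; rewrite -subr_eq0 -rmorphB /= -/t gt.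
  by rewrite rmorphM /= hf mulr0 eqxx.
have cop : coprimep f t.
  rewrite coprimep_def; apply/negPn/negP => sz.
  have := firr.2 _ sz (dvdp_gcdl f t) => /eqp_dvdl eq.
  by move: ndiv; rewrite -eq dvdp_gcdr.
case/Bezout_eq1_coprimepP: cop => [[u v]] /= e.
have := congr1 (horner_mx M) e; rewrite rmorphD !rmorphM /= hf mulr0 add0r rmorph1.
by rewrite -mulmxE => /mulmx1_unit[].
Qed.

Lemma C_card (F : finFieldType) l (f : {poly F}) :
  f \is monic -> size f = l.+2 -> irreducible_poly f ->
  #|mat_span_powers (companion l.+1 f)| = (#|F| ^ l.+1)%N.
Proof.
move=> fm fs firr; set M := companion l.+1 f.
rewrite /mat_span_powers card_imset; last first.
  move=> c1 c2 /eqP; rewrite -!hP -subr_eq0 -rmorphB /= => /eqP h0.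
  have d1 := mxminpoly_min h0.
  have d2 : mxminpoly M %| f.
    have := mxminpoly_dvd_char M.
    by rewrite /M /companion conform_eq ?companionmxK // fs.
  have sz : size (mxminpoly M) != 1%N.
    by rewrite size_mxminpoly eqSS -lt0n mxminpoly_nonconstant.
  have := firr.2 _ sz d2 => /eqp_dvdl eq.
  rewrite eq in d1.
  have r0 : Pc c1 - Pc c2 = 0.
    apply/eqP; apply/negP => /negP nz.
    have sr : (size (Pc c1 - Pc c2)%R <= l.+1)%N.
      by rewrite (leq_trans (size_polyD _ _)) // size_polyN geq_max !size_poly.
    have := dvdp_leq nz d1; rewrite fs => h.
    by have := leq_trans h sr; rewrite ltnn.
  apply/ffunP => i; have := congr1 (fun p : {poly F} => p`_i) r0.
  by rewrite /= coefB coef0 /Pc !coef_poly ltn_ord inord_val => /eqP; rewrite subr_eq0 => /eqP.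
by rewrite card_ffun card_ord.
Qed.

Lemma no_sun (F : finFieldType) l m (f : {poly F}) A0 A1 A2 :
  f \is monic -> size f = l.+2 -> irreducible_poly f ->
  A0 \in mat_span_powers (companion l.+1 f) ->
  A1 \in mat_span_powers (companion l.+1 f) ->
  A2 \in mat_span_powers (companion l.+1 f) ->
  A2 != A0 -> A2 != A1 ->
  (U m A2 <= col_mx (U m A0) (U m A1))%MS -> False.
Proof.
move=> fm fs firr h0 h1 h2 n20 n21 /U_span [D [e1 e2]].
set e := \col_(j < l.+1) ((j : nat) == 0%N)%:R : 'M[F]_(l.+1, 1).
have fcB X Y : first_col X - first_col Y = (X - Y) *m e by rewrite /first_col mulmxBl.
rewrite !fcB in e2.
have sq X Y : X *m Y = Y *m X -> X ^+ 2 - Y ^+ 2 = (X - Y) *m (X + Y).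
  by rewrite !mulmxE => c; rewrite mulrDr !mulrBl -c addrA subrK !expr2.
rewrite !sq ?(C_comm h2 h0) ?(C_comm h1 h0) // in e2.
rewrite !mulmxA -e1 in e2.
move/eqP: e2; rewrite -subr_eq0 -!mulmxA -mulmxBr -mulmxBl.
rewrite opprD addrACA subrr addr0 => /eqP e3.
have u20 := C_unit fm fs firr h2 h0 n20.
have u21 := C_unit fm fs firr h2 h1 n21.
have := congr1 (mulmx (invmx (A2 - A0))) e3.
rewrite mulKmx // mulmx0 => /(congr1 (mulmx (invmx (A2 - A1)))).
rewrite mulKmx // mulmx0 => /matrixP/(_ 0 0); rewrite !mxE /=.
by move/eqP; rewrite oner_eq0.
Qed.
Unset Implicit Arguments. Set Strict Implicit. Set Printing Implicit Defensive.

Theorem mainTheorem1 (F : finFieldType) (l n : nat) (f : {poly F}) :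
  (1 <= l)%N -> (l.*2.+1 <= n)%N ->
  f \is monic -> size f = l.+1 -> irreducible_poly f ->
  let q := #|F| in
  let k := (n - l)%N in
  let M : 'M[F]_l := companion l f in
  let C : {set 'M[F]_l} := mat_span_powers M in
  let Fam : {set 'M[F]_n} :=
    [set <<perp_mx (gen_mx n A)>>%MS | A in C] in
  (forall X, X \in Fam -> \rank X = k) /\
  #|Fam| = (q ^ l)%N /\
  (forall s : nat, (3 <= s)%N -> sunflower_free s Fam).
Proof.
case: l => [|l]; first by [].
move=> _ nge fm fs firr q k M C Fam.
have [m En] : exists m, n = (l.+1 + (l.+1 + (1 + m)))%N.
  by exists (n - (l.+1 + l.+1).+1)%N; rewrite -addnn in nge; lia.
subst n.
have FamE : Fam = [set <<perp_mx (U m A)>>%MS | A in C].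
  by rewrite /Fam; apply: eq_imset => A; rewrite genE.
rewrite FamE; split; [|split].
- move=> X /imsetP[A _ ->].
  by rewrite genmxE /perp_mx mxrank_ker mxrank_tr rank_U.
- rewrite card_imset ?C_card //.
  move=> A B /= e; have /andP[s1 _] := introT genmxP e.
  by apply/esym; apply: (U_inj (m := m)); exact: perp_sub s1.
move=> s s3 S Sin [dist [K hK]].
have p0 : (0 < s)%N by lia.
have p1 : (1 < s)%N by lia.
have p2 : (2 < s)%N by lia.
pose i0 := Ordinal p0; pose i1 := Ordinal p1; pose i2 := Ordinal p2.
have [A0 hA0 E0] := imsetP (Sin i0).
have [A1 hA1 E1] := imsetP (Sin i1).
have [A2 hA2 E2] := imsetP (Sin i2).
have neqA i j Ai Aj : i != j -> S i = <<perp_mx (U m Ai)>>%MS ->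
    S j = <<perp_mx (U m Aj)>>%MS -> Ai != Aj.
  move=> nij Ei Ej; apply/eqP => eij; have := dist i j nij.
  by rewrite Ei Ej eij !submx_refl.
have n20 : A2 != A0 by apply: (neqA i2 i0).
have n21 : A2 != A1 by apply: (neqA i2 i1).
apply: (no_sun (m:=m) fm fs firr hA0 hA1 hA2 n20 n21).
apply: perp_sub.
have k01 := hK i0 i1 isT; have k02 := hK i0 i2 isT.
have s012 : (S i0 :&: S i1 <= S i2)%MS.
  case/andP: k01 => a _; case/andP: k02 => _ b.
  exact: submx_trans a (submx_trans b (capmxSr _ _)).
apply: submx_trans (perp_col _ _) _.
move: s012; rewrite E0 E1 E2 !genmxE.
by move=> h; apply: submx_trans h; apply: capmxS; rewrite genmxE.
Qed.
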